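(* Let $n>p>1$, $X\in\mathbb{R}^{n\times p}$ with rows $x_1^T,\dots,x_n^T$, $Y=(y_1,\dots,y_n)^T$, $p\le h<n$, and assume that for every $(\circ_1,\dots,\circ_{n-1})\in\{+,-\}^{n-1}$ the $(n-1)\times p$ matrix with rows $(x_1\circ_kx_{k+1})^T$, $k=1,\dots,n-1$, has rank $p$. Let $l\in\{2,\dots,p\}$, let $i_1,\dots,i_l\in\{1,\dots,n\}$ be pairwise distinct and $\circ_1,\dots,\circ_{l-1}\in\{+,-\}$. If the system of $l-1$ equations $(x_{i_1}\circ_kx_{i_{k+1}})^T\beta=y_{i_1}\circ_ky_{i_{k+1}}$, $k=1,\dots,l-1$, has rank $l-1$, then there exist $i_{l+1}\in\{1,\dots,n\}\setminus\{i_1,\dots,i_l\}$ and $\circ_l\in\{+,-\}$ such that the system of the $l$ equations $(x_{i_1}\circ_kx_{i_{k+1}})^T\beta=y_{i_1}\circ_ky_{i_{k+1}}$, $k=1,\dots,l$, has rank $l$. Moreover, if some solution $\beta$ of the $(l-1)$-equation system satisfies $r^2_{i_1}(\beta)=r^2_{(h)}(\beta)=r^2_{(h+1)}(\beta)$, then $i_{l+1}$ can be chosen so that there exists $\beta_1\in\mathbb{R}^p$ with $r^2_{i_1}(\beta_1)=\dots=r^2_{i_l}(\beta_1)=r^2_{i_{l+1}}(\beta_1)=r^2_{(h)}(\beta_1)=r^2_{(h+1)}(\beta_1)$.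
   Context: $r_i(\beta)=y_i-x_i^T\beta$; $r^2_{(1)}(\beta)\le\dots\le r^2_{(n)}(\beta)$ are the sorted squared residuals. For $\circ\in\{+,-\}$, $a\circ b$ is $a+b$ or $a-b$. The rank of a linear system means the rank of its coefficient matrix. *)

(* Defs.v *)
From HB Require Import structures.
From mathcomp Require Import all_boot all_order all_algebra.
From mathcomp Require Import reals.
Set Implicit Arguments. Unset Strict Implicit. Unset Printing Implicit Defensive.
Import Order.TTheory GRing.Theory Num.Theory.
Local Open Scope ring_scope.

Section Defs.
Variables (R : realType) (n p : nat).

(* sign: true = '+', false = '-' ; a \circ b = a + sgn o * b *)
Definition sgn (o : bool) : R := if o then 1 else -1.

(* entry X_{i,c} with a 0-based nat row index (0 outside the range) *)
Definition Xat (X : 'M[R]_(n, p)) (i : nat) (c : 'I_p) : R :=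
  match @insub _ (fun k => k < n)%N 'I_n i with Some i' => X i' c | None => 0 end.

(* the (n-1) x p matrix with rows (x_1 o_k x_{k+1})^T, k = 1..n-1 (0-based: 0 and k+1) *)
Definition chainmx (X : 'M[R]_(n, p)) (o : 'I_n.-1 -> bool) : 'M[R]_(n.-1, p) :=
  \matrix_(k < n.-1, c < p) (Xat X 0 c + sgn (o k) * Xat X k.+1 c).

Definition sysA m (X : 'M[R]_(n, p)) (i1 : 'I_n) (j : 'I_m -> 'I_n)
  (o : 'I_m -> bool) : 'M[R]_(m, p) :=
  \matrix_(k < m, c < p) (X i1 c + sgn (o k) * X (j k) c).

Definition sysb m (Y : 'cV[R]_n) (i1 : 'I_n) (j : 'I_m -> 'I_n)
  (o : 'I_m -> bool) : 'cV[R]_m :=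
  \col_(k < m) (Y i1 0 + sgn (o k) * Y (j k) 0).

Definition sysArow (X : 'M[R]_(n, p)) (i1 j' : 'I_n) (o : bool) : 'rV[R]_p :=
  \row_(c < p) (X i1 c + sgn o * X j' c).

Definition res2 (X : 'M[R]_(n, p)) (Y : 'cV[R]_n) (beta : 'cV[R]_p) (i : 'I_n) : R :=
  ((Y - X *m beta) i 0) ^+ 2.

(* r^2_{(k)}(beta): k-th smallest squared residual, k 1-based *)
Definition res2_ord (X : 'M[R]_(n, p)) (Y : 'cV[R]_n) (beta : 'cV[R]_p) (k : nat) : R :=
  nth 0 (sort (fun a b : R => a <= b) [seq res2 X Y beta i | i <- enum 'I_n]) k.-1.

End Defs.

(* Main.v *)
Require Import Defs.
From HB Require Import structures.
From mathcomp Require Import all_boot all_order all_algebra.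
From mathcomp Require Import reals.
From mathcomp Require Import ring lra zify.
From Stdlib Require Import Classical.
Import Order.TTheory GRing.Theory Num.Theory.
Set Implicit Arguments. Unset Strict Implicit. Unset Printing Implicit Defensive.
Local Open Scope ring_scope.

Lemma sorted_nthP (R : realDomainType) (P : pred R)
  (hP : forall x y, y <= x -> P x -> P y) (s : seq R) :
  sorted (fun a b : R => a <= b) s ->
  forall k, (k < size s)%N -> P (nth 0 s k) = (k < count P s)%N.
Proof.
elim: s => [//|x s IH] /= hs.
have hall : all (fun y => x <= y) s.
  by apply: (order_path_min _ hs) => a b c; apply: le_trans.
have h0 : ~~ P x -> count P s = 0%N.
  move=> nPx; apply/eqP; rewrite -leqn0 leqNgt -has_count; apply/hasPn => y ys.
  apply/negP => Py; move/allP: hall => /(_ y ys) xy.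
  by move/negP: nPx; apply; apply: hP Py.
case=> [|k] hk /=.
  by case Px: (P x) => //=; rewrite h0 ?Px.
case Px: (P x) => /=.
  by rewrite IH ?(path_sorted hs).
rewrite h0 ?Px //; apply/negbTE/negP => Pn.
have: nth 0 s k \in s by apply: mem_nth.
move/allP: hall => hall' /hall' xy.
by move/negP: Px; apply; apply: hP Pn.
Qed.

Definition ordv (R : realType) n (f : 'I_n -> R) (k : nat) : R :=
  nth 0 (sort (fun a b : R => a <= b) [seq f i | i <- enum 'I_n]) k.-1.

Lemma ordv_char (R : realType) n (f : 'I_n -> R) v h :
  (0 < h)%N -> (h < n)%N ->
  (ordv f h = v /\ ordv f h.+1 = v) <->
  ((count (fun i => (f i < v)%R) (enum 'I_n) <= h.-1)%N /\
   (h < count (fun i => (f i <= v)%R) (enum 'I_n))%N).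
Proof.
move=> h0 hn.
rewrite /ordv.
set s := sort _ _.
have ss : sorted (fun a b : R => a <= b) s.
  by apply: sort_sorted => a b; apply: le_total.
have sz : size s = n by rewrite size_sort size_map size_enum_ord.
have cle : count (fun x => x <= v) s = count (fun i => (f i <= v)%R) (enum 'I_n).
  by rewrite count_sort count_map.
have clt : count (fun x => x < v) s = count (fun i => (f i < v)%R) (enum 'I_n).
  by rewrite count_sort count_map.
have Hle k : (k < n)%N -> (nth 0 s k <= v) = (k < count (fun i => (f i <= v)%R) (enum 'I_n))%N.
  move=> kn; rewrite -cle; apply: (sorted_nthP (P := fun x => x <= v)) => //.
    by move=> x y yx xv; apply: le_trans xv.
  by rewrite sz.
have Hlt k : (k < n)%N -> (nth 0 s k < v) = (k < count (fun i => (f i < v)%R) (enum 'I_n))%N.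
  move=> kn; rewrite -clt; apply: (sorted_nthP (P := fun x => x < v)) => //.
    by move=> x y yx xv; apply: le_lt_trans xv.
  by rewrite sz.
have hn1 : (h.-1 < n)%N by rewrite (leq_ltn_trans (leq_pred h)).
rewrite /=.
have e : h.-1.+1 = h by rewrite prednK.
split.
  move=> [e1 e2].
  have := Hlt _ hn1; have := Hle _ hn; have := Hlt _ hn.
  rewrite e1 e2 ltxx lexx => _ <- /esym /negbT; rewrite -leqNgt => ->.
  by [].
move=> [c1 c2].
have a1 : nth 0 s h.-1 <= v by rewrite Hle // (leq_ltn_trans (leq_pred h)).
have a2 : ~~ (nth 0 s h.-1 < v) by rewrite Hlt // -leqNgt.
have a3 : nth 0 s h <= v by rewrite Hle.
have a4 : ~~ (nth 0 s h < v).
  rewrite Hlt // -leqNgt (leq_trans c1) //; exact: leq_pred.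
by split; apply/eqP; rewrite eq_le ?a1 ?a3 -?leNgt /=; rewrite leNgt ?a2 ?a4.
Qed.

Lemma ordv_transfer (R : realType) n (f g : 'I_n -> R) m h :
  (0 < h)%N -> (h < n)%N ->
  (forall i, f i <= f m -> g i <= g m) ->
  (forall i, f m <= f i -> g m <= g i) ->
  f m = ordv f h -> ordv f h = ordv f h.+1 ->
  g m = ordv g h /\ ordv g h = ordv g h.+1.
Proof.
move=> h0 hn H1 H2 e1 e2.
have [c1 c2] : ((count (fun i => (f i < f m)%R) (enum 'I_n) <= h.-1)%N /\
   (h < count (fun i => (f i <= f m)%R) (enum 'I_n))%N).
  by apply/ordv_char => //; split; rewrite -?e2 e1.
have [] : ordv g h = g m /\ ordv g h.+1 = g m.
  apply/ordv_char => //; split.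
    apply: leq_trans c1; apply: sub_count => i /=.
    by rewrite !ltNge; apply: contra; apply: H2.
  apply: leq_trans c2 _; apply: sub_count => i /=; exact: H1.
by move=> -> ->.
Qed.

Lemma rank_ext (F : fieldType) m p (A : 'M[F]_(m, p)) (r : 'rV_p) (d : 'cV_p) :
  A *m d = 0 -> r *m d != 0 -> \rank (col_mx A r) = (\rank A).+1.
Proof.
move=> Ad rd.
have sub : (A <= col_mx A r)%MS by rewrite -addsmxE addsmxSl.
have le1 : (\rank (col_mx A r) <= (\rank A).+1)%N.
  rewrite -addsmxE (leq_trans (mxrank_adds_leqif A r)) //.
  by rewrite -[X in (_ <= X)%N]addn1 leq_add2l rank_leq_row.
have lt1 : (\rank A < \rank (col_mx A r))%N.
  rewrite (ltn_leqif (mxrank_leqif_sup sub)).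
  apply/negP; rewrite col_mx_sub => /andP [_ /submxP [D rD]].
  by move/negP: rd; apply; rewrite rD -mulmxA Ad mulmx0.
by apply/eqP; rewrite eqn_leq le1 lt1.
Qed.

Lemma sgn2 (R : realType) (o : bool) : sgn R o * sgn R o = 1.
Proof. by case: o; rewrite /sgn ?mulrNN mulr1. Qed.

Section S.
Variables (R : realType) (n p : nat) (X : 'M[R]_(n, p)) (Y : 'cV[R]_n).

Definition rr (b : 'cV[R]_p) i := (Y - X *m b) i 0.

Lemma rr_line b d t i : rr (b + t *: d) i = rr b i - t * (X *m d) i 0.
Proof.
rewrite /rr mulmxDr -scalemxAr !mxE; ring.
Qed.

Lemma sysA_mul m i1 (j : 'I_m -> 'I_n) o (b : 'cV[R]_p) k :
  (sysA X i1 j o *m b) k 0 = (X *m b) i1 0 + sgn R (o k) * (X *m b) (j k) 0.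
Proof.
rewrite !mxE mulr_sumr -big_split /=; apply: eq_bigr => c _.
by rewrite !mxE mulrDl mulrA.
Qed.

Lemma sysArow_mul i1 j' o (b : 'cV[R]_p) :
  (sysArow X i1 j' o *m b) 0 0 = (X *m b) i1 0 + sgn R o * (X *m b) j' 0.
Proof.
rewrite !mxE mulr_sumr -big_split /=; apply: eq_bigr => c _.
by rewrite !mxE mulrDl mulrA.
Qed.

Lemma sys_rr m i1 (j : 'I_m -> 'I_n) o (b : 'cV[R]_p) k :
  sysA X i1 j o *m b = sysb Y i1 j o ->
  rr b i1 + sgn R (o k) * rr b (j k) = 0.
Proof.
move=> e.
have H : (sysb Y i1 j o - sysA X i1 j o *m b) k 0 = rr b i1 + sgn R (o k) * rr b (j k).
  rewrite [LHS]mxE [(- (_ *m _)) k 0]mxE sysA_mul /sysb /rr !mxE.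
  have L (a0 b0 c0 d0 s0 : R) : a0 + s0 * b0 - (c0 + s0*d0) = a0 - c0 + s0*(b0 - d0) by ring.
  by rewrite L.
by rewrite -H e subrr mxE.
Qed.

Lemma sys0 m i1 (j : 'I_m -> 'I_n) o (d : 'cV[R]_p) k :
  sysA X i1 j o *m d = 0 -> (X *m d) i1 0 + sgn R (o k) * (X *m d) (j k) 0 = 0.
Proof.
move=> e; have := congr1 (fun M : 'cV[R]_m => M k 0) e.
by rewrite /= sysA_mul => ->; rewrite mxE.
Qed.

End S.

Lemma XatE (R : realType) n p (X : 'M[R]_(n,p)) (i : nat) (hi : (i < n)%N) c :
  Xat X i c = X (Ordinal hi) c.
Proof.
rewrite /Xat; case: insubP => [i' _ ei|]; last by rewrite hi.
by congr (X _ c); apply/val_inj.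
Qed.

Lemma exist_dir (R : realType) n p (X : 'M[R]_(n,p)) (hnp : (p < n)%N)
  (hX : forall o, \rank (chainmx X o) = p) l (hlp : (l <= p)%N) (hl2 : (2 <= l)%N)
  i1 (j : 'I_l.-1 -> 'I_n) o (hrank : \rank (sysA X i1 j o) = l.-1) :
  exists x : 'I_n * bool, exists d : 'cV[R]_p,
    [/\ (x.1 != i1) && [forall k, x.1 != j k], sysA X i1 j o *m d = 0 &
        (X *m d) x.1 0 - sgn R x.2 * (X *m d) i1 0 != 0].
Proof.
set A := sysA X i1 j o.
pose notT i := (i != i1) && [forall k, i != j k].
pose wv (x : 'I_n * bool) := row x.1 X - sgn R x.2 *: row i1 X.
have colm (M : 'M[R]_(p,p)) c i : (X *m col c M) i 0 = (X *m M) i c.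
  by rewrite !mxE; apply: eq_bigr => k _; rewrite !mxE.
case: (boolP [exists x, notT x.1 && ~~ (wv x <= A)%MS]).
  case/existsP => x /andP [nT]; rewrite submxE => nz.
  have [c hc] : exists c, (wv x *m cokermx A) 0 c != 0.
    apply/existsP; apply: contraR nz => H0.
    apply/eqP/matrixP => a c; rewrite ord1 [RHS]mxE.
    case: (boolP ((wv x *m cokermx A) 0 c == 0)) => [/eqP //| nz0].
    by exfalso; move/negP: H0; apply; apply/existsP; exists c.
  exists x, (col c (cokermx A)); split => //.
    apply/matrixP => a b.
    transitivity ((A *m cokermx A) a c); last by rewrite mulmx_coker !mxE.
    by rewrite !mxE; apply: eq_bigr => k _; rewrite !mxE.
  rewrite !colm.
  have <- : (wv x *m cokermx A) 0 c = (X *m cokermx A) x.1 c - sgn R x.2 * (X *m cokermx A) i1 c.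
    by rewrite /wv mulmxBl -scalemxAl -!row_mul !mxE.
  exact: hc.
move/existsPn => H.
have Hw x : notT x.1 -> (wv x <= A)%MS.
  by move=> nx; move: (H x); rewrite nx /= negbK.
have [i0 ni0] : exists i0, notT i0.
  pose S := i1 |: [set j k | k : 'I_l.-1].
  case: (pickP (fun i => i \notin S)) => [i0 Hi0 | H0].
    exists i0; apply/andP; split.
      by apply: contraNneq Hi0 => ->; rewrite setU11.
    apply/forallP => k; apply: contraNneq Hi0 => ->; rewrite setU1r //.
    by apply/imsetP; exists k.
  exfalso.
  have c0 : (n <= #|S|)%N.
    rewrite -{1}(card_ord n); apply: subset_leq_card; apply/subsetP => i _.
    by move: (H0 i) => /negbFE.
  have c1 : (#|[set j k | k : 'I_l.-1]| <= l.-1)%N.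
    by rewrite (leq_trans (leq_imset_card _ _)) ?card_ord.
  have c2 := cardsU1 i1 [set j k | k : 'I_l.-1].
  rewrite -/S in c2.
  have : (#|S| <= 1 + l.-1)%N by rewrite c2 leq_add ?leq_b1.
  lia.
have r1 : (row i1 X <= A)%MS.
  have -> : row i1 X = 2^-1 *: (wv (i0,false) - wv (i0,true)).
    by apply/rowP => c; rewrite /wv /sgn !mxE /=; field.
  apply: scalemx_sub; apply: addmx_sub; first exact: Hw.
  by rewrite -scaleN1r; apply: scalemx_sub; apply: Hw.
have rall i : (row i X <= A)%MS.
  case: (boolP (notT i)) => ni.
    have -> : row i X = wv (i,true) + row i1 X by rewrite /wv /sgn scale1r subrK.
    by apply: addmx_sub => //; apply: Hw.
  move: ni; rewrite negb_and negbK negb_forall => /orP [/eqP -> // | /existsP [k /negbNE /eqP ->]].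
  have -> : row (j k) X = sgn R (o k) *: (row k A - row i1 X).
    apply/rowP => c; rewrite !mxE.
    by rewrite addrAC subrr add0r mulrA sgn2 mul1r.
  apply: scalemx_sub; apply: addmx_sub; first exact: row_sub.
  by rewrite -scaleN1r; apply: scalemx_sub.
have XA : (X <= A)%MS by apply/row_subP.
have n0 : (0 < n)%N by lia.
have cA : (chainmx X (fun _ => true) <= A)%MS.
  apply/row_subP => k.
  have hk : (k.+1 < n)%N by have := ltn_ord k; lia.
  have -> : row k (chainmx X (fun _ => true)) = row (Ordinal n0) X + sgn R true *: row (Ordinal hk) X.
    by apply/rowP => c; rewrite !mxE (XatE X n0) (XatE X hk).
  by apply: addmx_sub => //; apply: scalemx_sub.
have := mxrankS cA; rewrite hX hrank.
lia.
Qed.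

Lemma cross1 (R : realType) (a b t : R) : 0 <= t -> a * (a - t * b) <= 0 ->
  a - t * b != 0 -> [/\ b != 0, 0 <= a / b & a / b < t].
Proof.
move=> t0 h1 h2.
case: (eqVneq b 0) => [b0|b0].
  rewrite b0 mulr0 subr0 in h1 h2.
  have a0 : a = 0 by nra.
  by rewrite a0 eqxx in h2.
set q := a / b.
have aq : a = q * b by rewrite /q divfK.
rewrite aq in h1 h2.
have bb : 0 < b * b by nra.
have hq : q * (q - t) <= 0.
  have e : q * b * (q * b - t * b) = (b * b) * (q * (q - t)) by ring.
  rewrite e in h1; rewrite -(pmulr_rle0 _ bb) //.
have qt : q != t.
  by apply: contraNneq h2 => ->; rewrite subrr.
split => //.
  by nra.
case: (ltgtP q t) => // tq; last by rewrite tq eqxx in qt.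
by nra.
Qed.

Lemma cross2 (R : realType) (a1 b1 a2 b2 t : R) : 0 <= t ->
  (a1 * a2) * ((a1 - t * b1) * (a2 - t * b2)) <= 0 ->
  (a1 - t * b1) * (a2 - t * b2) != 0 ->
  [/\ b1 != 0, 0 <= a1 / b1 & a1 / b1 < t] \/ [/\ b2 != 0, 0 <= a2 / b2 & a2 / b2 < t].
Proof.
move=> t0 h1 h2.
have e : (a1 * a2) * ((a1 - t * b1) * (a2 - t * b2)) =
  (a1 * (a1 - t * b1)) * (a2 * (a2 - t * b2)) by ring.
rewrite e in h1.
rewrite mulf_eq0 negb_or in h2; case/andP: h2 => n1 n2.
case: (lerP (a1 * (a1 - t * b1)) 0) => c1.
  by left; apply: cross1.
right; apply: cross1 => //.
by rewrite -(pmulr_rle0 _ c1).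
Qed.

Lemma res2_rr (R : realType) n p (X : 'M[R]_(n,p)) Y b i : res2 X Y b i = rr X Y b i ^+ 2.
Proof. by []. Qed.

Lemma mainstep (R : realType) n p h (X : 'M[R]_(n, p)) (Y : 'cV[R]_n)
  (h0 : (0 < h)%N) (hhn : (h < n)%N) l (hl2 : (2 <= l)%N)
  (i1 : 'I_n) (j : 'I_l.-1 -> 'I_n) (o : 'I_l.-1 -> bool)
  (hrank : \rank (sysA X i1 j o) = l.-1)
  (b0 : 'cV[R]_p) (hsys : sysA X i1 j o *m b0 = sysb Y i1 j o)
  (ho1 : res2 X Y b0 i1 = res2_ord X Y b0 h)
  (ho2 : res2_ord X Y b0 h = res2_ord X Y b0 h.+1)
  (d : 'cV[R]_p) (hd : sysA X i1 j o *m d = 0) (x0 : 'I_n * bool)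
  (hx0 : [&& (x0.1 != i1) && [forall k, x0.1 != j k],
          (X *m d) x0.1 0 - sgn R x0.2 * (X *m d) i1 0 != 0 &
          0 <= (rr X Y b0 x0.1 - sgn R x0.2 * rr X Y b0 i1) /
               ((X *m d) x0.1 0 - sgn R x0.2 * (X *m d) i1 0)]) :
  exists (j' : 'I_n) (o' : bool),
    [/\ j' != i1, (forall k, j' != j k),
        \rank (col_mx (sysA X i1 j o) (sysArow X i1 j' o')) = l &
        exists beta1 : 'cV[R]_p,
           [/\ (forall k, res2 X Y beta1 (j k) = res2 X Y beta1 i1),
               res2 X Y beta1 j' = res2 X Y beta1 i1,
               res2 X Y beta1 i1 = res2_ord X Y beta1 h &
               res2_ord X Y beta1 h = res2_ord X Y beta1 h.+1]].
Proof.
pose r i := rr X Y b0 i.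
pose dl i := (X *m d) i 0.
pose aa (x : 'I_n * bool) := r x.1 - sgn R x.2 * r i1.
pose bb (x : 'I_n * bool) := dl x.1 - sgn R x.2 * dl i1.
pose Pc (x : 'I_n * bool) := [&& (x.1 != i1) && [forall k, x.1 != j k], bb x != 0 & 0 <= aa x / bb x].
pose F x := aa x / bb x.
have Px0 : Pc x0 by exact: hx0.
case: (@arg_minP _ _ _ x0 Pc F Px0) => [[x1 e] Pxs Hmin].
set t := F (x1, e).
move: Pxs; rewrite /Pc /= => /and3P [nx1 bn an].
have t0 : 0 <= t by [].
pose b1 := b0 + t *: d.
have rrb i : rr X Y b1 i = r i - t * dl i by rewrite /b1 rr_line.
have fac i (s : R) : (r i - s * dl i) ^+ 2 - (r i1 - s * dl i1) ^+ 2 =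
    (aa (i, true) - s * bb (i, true)) * (aa (i, false) - s * bb (i, false)).
  by rewrite /aa /bb /sgn /=; ring.
have fac0 i : r i ^+ 2 - r i1 ^+ 2 = aa (i, true) * aa (i, false).
  by rewrite /aa /sgn /=; ring.
have Teq k (s : R) : (r (j k) - s * dl (j k)) ^+ 2 = (r i1 - s * dl i1) ^+ 2.
  have e1 := sys_rr k hsys; have e2 := sys0 k hd.
  have s2 := sgn2 R (o k).
  move: e1 e2 s2; rewrite -/(r i1) -/(r (j k)) -/(dl i1) -/(dl (j k)).
  move: (sgn R (o k)) => sk.
  move/eqP; rewrite addr_eq0 => /eqP ->; move/eqP; rewrite addr_eq0 => /eqP -> s2.
  transitivity (sk * sk * (r (j k) - s * dl (j k)) ^+ 2); first by rewrite s2 mul1r.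
  ring.
have notTP i : ~~ ((i != i1) && [forall k, i != j k]) -> i = i1 \/ exists k, i = j k.
  rewrite negb_and negbK negb_forall => /orP [/eqP -> | /existsP [k /negbNE /eqP ->]].
    by left.
  by right; exists k.
have key i : (i != i1) && [forall k, i != j k] ->
    (aa (i, true) * aa (i, false)) *
    ((aa (i, true) - t * bb (i, true)) * (aa (i, false) - t * bb (i, false))) <= 0 ->
    (aa (i, true) - t * bb (i, true)) * (aa (i, false) - t * bb (i, false)) != 0 -> False.
  move=> ni h1 h2.
  case: (cross2 t0 h1 h2) => [[bn' an' al]|[bn' an' al]].
    have := Hmin (i, true); rewrite /Pc /= ni bn' an' => /(_ isT).
    by rewrite leNgt al.
  have := Hmin (i, false); rewrite /Pc /= ni bn' an' => /(_ isT).
  by rewrite leNgt al.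
have gdiff i : res2 X Y b1 i - res2 X Y b1 i1 =
   (aa (i, true) - t * bb (i, true)) * (aa (i, false) - t * bb (i, false)).
  by rewrite !res2_rr !rrb fac.
have fdiff i : res2 X Y b0 i - res2 X Y b0 i1 = aa (i, true) * aa (i, false).
  by rewrite !res2_rr fac0.
have gT i : ~~ ((i != i1) && [forall k, i != j k]) -> res2 X Y b1 i = res2 X Y b1 i1.
  move/notTP => [-> //|[k ->]].
  by rewrite !res2_rr !rrb Teq.
have H1 : forall i, res2 X Y b0 i <= res2 X Y b0 i1 -> res2 X Y b1 i <= res2 X Y b1 i1.
  move=> i hf; case: (boolP ((i != i1) && [forall k, i != j k])) => ni; last by rewrite gT.
  rewrite leNgt; apply/negP => hg; apply: (key i ni).
    rewrite -fdiff -gdiff mulr_le0_ge0 // ?subr_le0 //.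
    by rewrite ltW // subr_gt0.
  by rewrite -gdiff subr_eq0 gt_eqF.
have H2 : forall i, res2 X Y b0 i1 <= res2 X Y b0 i -> res2 X Y b1 i1 <= res2 X Y b1 i.
  move=> i hf; case: (boolP ((i != i1) && [forall k, i != j k])) => ni; last by rewrite gT.
  rewrite leNgt; apply/negP => hg; apply: (key i ni).
    rewrite -fdiff -gdiff mulr_ge0_le0 // ?subr_ge0 //.
    by rewrite ltW // subr_lt0.
  by rewrite -gdiff subr_eq0 lt_eqF.
have l0 : (0 < l)%N by lia.
exists x1, (~~ e); split.
- by case/andP: nx1.
- by move=> k; case/andP: nx1 => _ /forallP.
- rewrite (rank_ext hd) ?hrank ?prednK //.
  apply/negP => /eqP ez.
  have := congr1 (fun M : 'M[R]_(1,1) => M 0 0) ez.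
  rewrite /= sysArow_mul => ez0.
  have ez' : (X *m d) i1 0 + sgn R (~~ e) * (X *m d) x1 0 = 0 by rewrite ez0 mxE.
  have : bb (x1, e) = - sgn R e * ((X *m d) i1 0 + sgn R (~~ e) * (X *m d) x1 0).
    have gen2 : forall e' : bool, dl x1 - sgn R e' * dl i1 = - sgn R e' * (dl i1 + sgn R (~~ e') * dl x1).
      by case; rewrite /sgn /=; ring.
    exact: gen2.
  by rewrite ez' mulr0 => ebb; rewrite ebb eqxx in bn.
- exists b1; split.
  + move=> k; apply: gT; rewrite negb_and negb_forall; apply/orP; right.
    by apply/existsP; exists k; rewrite eqxx.
  + apply/eqP; rewrite -subr_eq0 gdiff.
    have z : aa (x1, e) - t * bb (x1, e) = 0.
      by rewrite /t /F divfK // subrr.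
    have gen : forall e' : bool, aa (x1, e') - t * bb (x1, e') = 0 ->
      (aa (x1,true) - t*bb (x1,true)) * (aa (x1,false) - t*bb(x1,false)) = 0.
      by case=> ->; rewrite ?mul0r ?mulr0.
    by apply/eqP; exact: gen z.
  + by have [] := ordv_transfer h0 hhn H1 H2 ho1 ho2.
  + by have [] := ordv_transfer h0 hhn H1 H2 ho1 ho2.
Qed.

Unset Implicit Arguments. Set Strict Implicit. Set Printing Implicit Defensive.

Theorem lemma5 (R : realType) (n p h : nat) (X : 'M[R]_(n, p)) (Y : 'cV[R]_n)
  (hnp : (p < n)%N) (hp1 : (1 < p)%N) (hph : (p <= h)%N) (hhn : (h < n)%N)
  (hX : forall o : 'I_n.-1 -> bool, \rank (chainmx X o) = p)
  (l : nat) (hl2 : (2 <= l)%N) (hlp : (l <= p)%N)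
  (i1 : 'I_n) (j : 'I_l.-1 -> 'I_n) (o : 'I_l.-1 -> bool)
  (hjinj : injective j) (hji1 : forall k, j k != i1)
  (hrank : \rank (sysA X i1 j o) = l.-1) :
  exists (j' : 'I_n) (o' : bool),
    [/\ j' != i1, (forall k, j' != j k),
        \rank (col_mx (sysA X i1 j o) (sysArow X i1 j' o')) = l &
        ((exists beta : 'cV[R]_p,
            [/\ sysA X i1 j o *m beta = sysb Y i1 j o,
                res2 X Y beta i1 = res2_ord X Y beta h &
                res2_ord X Y beta h = res2_ord X Y beta h.+1]) ->
         exists beta1 : 'cV[R]_p,
           [/\ (forall k, res2 X Y beta1 (j k) = res2 X Y beta1 i1),
               res2 X Y beta1 j' = res2 X Y beta1 i1,
               res2 X Y beta1 i1 = res2_ord X Y beta1 h &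
               res2_ord X Y beta1 h = res2_ord X Y beta1 h.+1])].
Proof.
have [[x0 e0] [d [nT hd hb]]] := exist_dir hnp hX hlp hl2 hrank.
have l0 : (0 < l)%N by lia.
have h0 : (0 < h)%N by lia.
case: (classic (exists beta : 'cV[R]_p,
            [/\ sysA X i1 j o *m beta = sysb Y i1 j o,
                res2 X Y beta i1 = res2_ord X Y beta h &
                res2_ord X Y beta h = res2_ord X Y beta h.+1])) => [[b0 [hs ho1 ho2]] | nh].
  pose a0 := rr X Y b0 x0 - sgn R e0 * rr X Y b0 i1.
  pose c0 := (X *m d) x0 0 - sgn R e0 * (X *m d) i1 0.
  have fin : forall d' : 'cV[R]_p, sysA X i1 j o *m d' = 0 ->
    [&& ((x0, e0).1 != i1) && [forall k, (x0, e0).1 != j k],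
          (X *m d') (x0, e0).1 0 - sgn R (x0, e0).2 * (X *m d') i1 0 != 0 &
          0 <= (rr X Y b0 (x0, e0).1 - sgn R (x0, e0).2 * rr X Y b0 i1) /
               ((X *m d') (x0, e0).1 0 - sgn R (x0, e0).2 * (X *m d') i1 0)] ->
    exists (j' : 'I_n) (o' : bool),
    [/\ j' != i1, (forall k, j' != j k),
        \rank (col_mx (sysA X i1 j o) (sysArow X i1 j' o')) = l &
        ((exists beta : 'cV[R]_p,
            [/\ sysA X i1 j o *m beta = sysb Y i1 j o,
                res2 X Y beta i1 = res2_ord X Y beta h &
                res2_ord X Y beta h = res2_ord X Y beta h.+1]) ->
         exists beta1 : 'cV[R]_p,
           [/\ (forall k, res2 X Y beta1 (j k) = res2 X Y beta1 i1),
               res2 X Y beta1 j' = res2 X Y beta1 i1,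
               res2 X Y beta1 i1 = res2_ord X Y beta1 h &
               res2_ord X Y beta1 h = res2_ord X Y beta1 h.+1])].
    move=> d' hd' hx.
    have [j' [o' [q1 q2 q3 q4]]] := mainstep h0 hhn hl2 hrank hs ho1 ho2 hd' hx.
    by exists j', o'; split.
  case: (lerP 0 (a0 / c0)) => ha.
    by apply: (fin d hd); rewrite /= nT hb.
  apply: (fin (- d)); first by rewrite mulmxN hd oppr0.
  rewrite /= nT /=.
  have -> : (X *m - d) x0 0 - sgn R e0 * (X *m - d) i1 0 = - c0.
    by rewrite /c0 mulmxN !mxE; ring.
  rewrite oppr_eq0 hb /= invrN mulrN oppr_ge0.
  exact: ltW.
exists x0, (~~ e0); split.
- by case/andP: nT.
- by move=> k; case/andP: nT => _ /forallP.
- rewrite (rank_ext hd) ?hrank ?prednK //.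
  apply/negP => /eqP ez.
  have := congr1 (fun M : 'M[R]_(1,1) => M 0 0) ez.
  rewrite /= sysArow_mul => ez0.
  have ez' : (X *m d) i1 0 + sgn R (~~ e0) * (X *m d) x0 0 = 0 by rewrite ez0 mxE.
  have gen2 : forall e' : bool, (X *m d) x0 0 - sgn R e' * (X *m d) i1 0 =
     - sgn R e' * ((X *m d) i1 0 + sgn R (~~ e') * (X *m d) x0 0).
    by case; rewrite /sgn /=; ring.
  by move: hb; rewrite gen2 ez' mulr0 eqxx.
- by move=> H; exfalso; apply: nh.
Qed.
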